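(* Let $\mathcal{H}$ be a reproducing kernel Hilbert space of real-valued functions on $\mathbb{R}^p$ with positive definite reproducing kernel $K$ and norm $\|\cdot\|_{\mathcal{H}}$. Let training data $\{(y_i,\mathbf{x}_i)\}_{i=1}^N\subset\mathbb{R}\times\mathbb{R}^p$ be given, set $\mathbf{y}:=[y_1,\dots,y_N]'$, and let $\mathbf{K}\in\mathbb{R}^{N\times N}$ with $[\mathbf{K}]_{ij}=K(\mathbf{x}_i,\mathbf{x}_j)$ be positive definite. Let $\mu\ge0$, $\lambda_1\ge0$, and define $$\mathbf{X}_\mu:=\begin{bmatrix}\mathbf{I}_N-\mathbf{K}(\mathbf{K}+\mu\mathbf{I}_N)^{-1}\\ (\mu\mathbf{K})^{1/2}(\mathbf{K}+\mu\mathbf{I}_N)^{-1}\end{bmatrix}\in\mathbb{R}^{2N\times N}.$$ Let $$\hat{\mathbf{o}}_{\mathrm{Lasso}}\in\arg\min_{\mathbf{o}\in\mathbb{R}^N}\ \|\mathbf{X}_\mu\mathbf{y}-\mathbf{X}_\mu\mathbf{o}\|_2^2+\lambda_1\|\mathbf{o}\|_1 .$$ Then the minimizers $(\hat f,\hat{\mathbf{o}})$ of $$\min_{f\in\mathcal{H},\ \mathbf{o}\in\mathbb{R}^N}\Big[\sum_{i=1}^N (y_i-f(\mathbf{x}_i)-o_i)^2+\mu\|f\|_{\mathcal{H}}^2+\lambda_1\|\mathbf{o}\|_1\Big]$$ are determined by $\hat{\mathbf{o}}_{\mathrm{Lasso}}$ as $\hat{\mathbf{o}}=\hat{\mathbf{o}}_{\mathrm{Lasso}}$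 and $\hat f(\mathbf{x})=\sum_{i=1}^N\hat\beta_iK(\mathbf{x},\mathbf{x}_i)$ with $\hat{\boldsymbol\beta}=(\mathbf{K}+\mu\mathbf{I}_N)^{-1}(\mathbf{y}-\hat{\mathbf{o}}_{\mathrm{Lasso}})$; i.e., this pair is a minimizer of the latter problem.
   Context: $(\mu\mathbf{K})^{1/2}$ denotes the symmetric positive semidefinite square root; $\mathbf{I}_N$ is the $N\times N$ identity. *)

(* Defs.v *)
From HB Require Import structures.
From mathcomp Require Import all_boot all_order all_algebra.
From mathcomp Require Import reals.
Set Implicit Arguments. Unset Strict Implicit. Unset Printing Implicit Defensive.
Import Order.TTheory GRing.Theory Num.Theory.
Local Open Scope ring_scope.

Section Defs.
Variables (R : realType) (p : nat).
Notation pt := 'rV[R]_p.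
Notation fn := (pt -> R).

(* positive definite kernel (in the kernel-methods sense): symmetric, and
   every Gram matrix is positive semidefinite *)
Definition pd_kernel (K : pt -> pt -> R) : Prop :=
  (forall x z, K x z = K z x) /\
  (forall (n : nat) (xs : 'I_n -> pt) (c : 'I_n -> R),
      0 <= \sum_(i < n) \sum_(j < n) c i * c j * K (xs i) (xs j)).

Definition hnorm2 (ip : fn -> fn -> R) (f : fn) : R := ip f f.

Definition is_RKHS (H : fn -> Prop) (ip : fn -> fn -> R) (K : pt -> pt -> R)
  : Prop :=
      H (fun _ => 0)
    /\ (forall f g, H f -> H g -> H (fun z => f z + g z))
    /\ (forall a f, H f -> H (fun z => a * f z))
    /\
      (forall f g, H f -> H g -> ip f g = ip g f)
    /\ (forall a f g h, H f -> H g -> H h ->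
          ip (fun z => a * f z + g z) h = a * ip f h + ip g h)
    /\ (forall f, H f -> 0 <= ip f f)
    /\ (forall f, H f -> ip f f = 0 -> f = (fun _ => 0))
    /\
      (forall u : nat -> fn, (forall n, H (u n)) ->
         (forall e : R, 0 < e -> exists M : nat, forall m n : nat,
             (M <= m)%N -> (M <= n)%N ->
             hnorm2 ip (fun z => u m z - u n z) < e) ->
         exists f, H f /\ forall e : R, 0 < e -> exists M : nat,
             forall n : nat, (M <= n)%N -> hnorm2 ip (fun z => u n z - f z) < e)
    /\
      (forall x, H (fun z => K z x))
    /\
      (forall f x, H f -> ip f (fun z => K z x) = f x).

End Defs.

Section MatDefs.
Variables (R : realType) (N : nat).

Definition posdef_mx (A : 'M[R]_N) : Prop :=
  A^T = A /\ forall v : 'cV[R]_N, v != 0 -> 0 < (v^T *m A *m v) 0 0.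

Definition possemidef_mx (A : 'M[R]_N) : Prop :=
  A^T = A /\ forall v : 'cV[R]_N, 0 <= (v^T *m A *m v) 0 0.

Definition is_psd_sqrt (A S : 'M[R]_N) : Prop :=
  possemidef_mx S /\ S *m S = A.

Definition sqnorm2 {m : nat} (v : 'cV[R]_m) : R := \sum_(i < m) v i 0 ^+ 2.
Definition norm1 {m : nat} (v : 'cV[R]_m) : R := \sum_(i < m) `|v i 0|.

(* X_mu = [ I - K (K + mu I)^-1 ; (mu K)^{1/2} (K + mu I)^-1 ], given S = (mu K)^{1/2} *)
Definition X_mu (Km S : 'M[R]_N) (mu : R) : 'M[R]_(N + N, N) :=
  col_mx (1%:M - Km *m invmx (Km + mu%:M)) (S *m invmx (Km + mu%:M)).

End MatDefs.

(* Main.v *)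
Require Import Defs.
From HB Require Import structures.
From mathcomp Require Import all_boot all_order all_algebra.
From mathcomp Require Import reals.
From mathcomp Require Import ring lra.
From Stdlib Require Import FunctionalExtensionality.
Import Order.TTheory GRing.Theory Num.Theory.
Local Open Scope ring_scope.

Section Helpers.
Variables (R : realType) (p : nat).
Variables (H : ('rV[R]_p -> R) -> Prop) (ip : ('rV[R]_p -> R) -> ('rV[R]_p -> R) -> R)
  (K : 'rV[R]_p -> 'rV[R]_p -> R).
Hypothesis hR : is_RKHS H ip K.

Lemma ip0 h : H h -> ip (fun _ => 0) h = 0.
Proof.
move=> Hh; have [h0 [hadd [hsc [hsym [hlin _]]]]] := hR.
have := hlin 1 (fun _ => 0) (fun _ => 0) h h0 h0.
rewrite /=.
have -> : (fun z : 'rV[R]_p => 1 * (0:R) + 0) = (fun _ => 0).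
  by apply: functional_extensionality => z; rewrite mul1r addr0.
rewrite mul1r; set t := ip _ h => /(_ Hh) e; lra.
Qed.

Lemma sum_ker n (c : 'I_n -> R) (xs : 'I_n -> 'rV[R]_p) :
  H (fun z => \sum_(i < n) c i * K z (xs i)) /\
  forall h, H h -> ip (fun z => \sum_(i < n) c i * K z (xs i)) h
                   = \sum_(i < n) c i * h (xs i).
Proof.
have [h0 [hadd [hsc [hsym [hlin [_ [_ [_ [hker hrep]]]]]]]]] := hR.
elim: n c xs => [|n IH] c xs.
  have -> : (fun z => \sum_(i < 0) c i * K z (xs i)) = (fun _ => 0).
    by apply: functional_extensionality => z; rewrite big_ord0.
  split => // h Hh; by rewrite big_ord0 ip0.
have -> : (fun z => \sum_(i < n.+1) c i * K z (xs i)) =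
  (fun z => c ord0 * (fun z => K z (xs ord0)) z +
     (fun z => \sum_(i < n) c (lift ord0 i) * K z (xs (lift ord0 i))) z).
  by apply: functional_extensionality => z; rewrite big_ord_recl.
have [IH1 IH2] := IH (fun i => c (lift ord0 i)) (fun i => xs (lift ord0 i)).
split.
  apply: (hadd (fun z => c ord0 * K z (xs ord0))) => //.
  exact: hsc.
move=> h Hh; rewrite hlin // IH2 // big_ord_recl hsym // hrep //.
Qed.

End Helpers.

Lemma sqnorm2_tr (R : realType) m (v : 'cV[R]_m) : sqnorm2 v = (v^T *m v) 0 0.
Proof. by rewrite /sqnorm2 mxE; apply: eq_bigr => i _; rewrite !mxE expr2. Qed.

Lemma sqnorm2_col (R : realType) m1 m2 (a : 'cV[R]_m1) (b : 'cV[R]_m2) :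
  sqnorm2 (col_mx a b) = sqnorm2 a + sqnorm2 b.
Proof.
rewrite /sqnorm2 big_split_ord; congr (_ + _); apply: eq_bigr => i _.
  by rewrite col_mxEu.
by rewrite col_mxEd.
Qed.

Lemma posdef_unit (R : realType) N (Km : 'M[R]_N) mu :
  posdef_mx Km -> 0 <= mu -> Km + mu%:M \in unitmx.
Proof.
move=> [hT hpos] mu0.
rewrite unitmxE unitfE; apply/negP => /det0P [v vn0 hv].
have := hpos v^T; rewrite trmx_eq0 trmxK => /(_ vn0).
have : (v *m (Km + mu%:M) *m v^T) 0 0 = 0 by rewrite hv mul0mx mxE.
rewrite mulmxDr mul_mx_scalar mulmxDl -scalemxAl mxE [X in _ + X]mxE => e.
have : 0 <= (v *m v^T) 0 0.
  rewrite mxE; apply: sumr_ge0 => i _; rewrite !mxE; by rewrite -expr2 sqr_ge0.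
move=> h1 h2.
have : 0 <= mu * (v *m v^T) 0 0 by apply: mulr_ge0.
lra.
Qed.

Lemma key (R : realType) (p : nat)
  (H : ('rV[R]_p -> R) -> Prop) (ip : ('rV[R]_p -> R) -> ('rV[R]_p -> R) -> R)
  (K : 'rV[R]_p -> 'rV[R]_p -> R) (hR : is_RKHS H ip K) N
  (x : 'I_N -> 'rV[R]_p) (S : 'M[R]_N) (mu : R) (r : 'cV[R]_N) :
  let Km := \matrix_(i < N, j < N) K (x i) (x j) in
  posdef_mx Km -> 0 <= mu -> is_psd_sqrt (mu *: Km) S ->
  let beta := invmx (Km + mu%:M) *m r in
  let fh := fun z => \sum_(i < N) beta i 0 * K z (x i) in
  H fh /\
  sqnorm2 (X_mu Km S mu *m r) = \sum_(i < N) (r i 0 - fh (x i)) ^+ 2 + mu * ip fh fh /\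
  forall f, H f ->
    sqnorm2 (X_mu Km S mu *m r) <= \sum_(i < N) (r i 0 - f (x i)) ^+ 2 + mu * ip f f.
Proof.
move=> Km pd mu0 [[ST _] SS] beta fh.
have hU : Km + mu%:M \in unitmx by apply: posdef_unit.
have Abeta : (Km + mu%:M) *m beta = r by rewrite /beta mulmxA mulmxV // mul1mx.
have fhx i : fh (x i) = (Km *m beta) i 0.
  by rewrite /fh mxE; apply: eq_bigr => j _; rewrite !mxE mulrC.
have rfh i : r i 0 = fh (x i) + mu * beta i 0.
  by rewrite fhx -{1}Abeta mulmxDl mul_scalar_mx [LHS]mxE [X in _ + X]mxE.
have [Hfh ipfh] := @sum_ker R p H ip K hR N (fun i => beta i 0) x.
have ipff : ip fh fh = \sum_i beta i 0 * fh (x i) := ipfh fh Hfh.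
have eqB : sqnorm2 (X_mu Km S mu *m r) =
    \sum_(i < N) (r i 0 - fh (x i)) ^+ 2 + mu * ip fh fh.
  rewrite /X_mu mul_col_mx sqnorm2_col; congr (_ + _).
    rewrite /sqnorm2; apply: eq_bigr => i _.
    rewrite mulmxBl mul1mx -mulmxA -/beta fhx; congr (_ ^+ 2).
    by rewrite !mxE.
  rewrite -mulmxA -/beta sqnorm2_tr trmx_mul ST mulmxA -(mulmxA beta^T) SS.
  rewrite -scalemxAr -scalemxAl mxE ipff; congr (_ * _).
  rewrite -mulmxA [LHS]mxE; apply: eq_bigr => i _; rewrite fhx; congr (_ * _).
  by rewrite mxE.
split=> //; split=> // f Hf.
have [h0 [hadd [hsc [hsym [hlin [hpos _]]]]]] := hR.
set d := fun z => (-1) * fh z + f z.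
have Hd : H d by apply: (hadd (fun z => (-1) * fh z)) => //; exact: hsc.
have ipdd : ip d d = - (\sum_i beta i 0 * d (x i)) + ip f d.
  by rewrite {1}/d hlin // (ipfh d Hd) mulN1r.
have ipfd : ip f d = - (\sum_i beta i 0 * f (x i)) + ip f f.
  by rewrite hsym // /d hlin // (ipfh f Hf) mulN1r.
have Cab : \sum_i beta i 0 * d (x i) =
   \sum_i beta i 0 * f (x i) - \sum_i beta i 0 * fh (x i).
  rewrite -sumrB; apply: eq_bigr => i _; rewrite /d; ring.
have S1 : \sum_(i < N) (r i 0 - f (x i)) ^+ 2 =
   \sum_(i < N) (r i 0 - fh (x i)) ^+ 2 + \sum_(i < N) (f (x i) - fh (x i)) ^+ 2
   + (2 * mu) * (\sum_i beta i 0 * fh (x i)) - (2 * mu) * (\sum_i beta i 0 * f (x i)).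
  rewrite !mulr_sumr -!big_split -sumrB /=; apply: eq_bigr => i _.
  rewrite rfh; ring.
have S3 : 0 <= \sum_(i < N) (f (x i) - fh (x i)) ^+ 2.
  by apply: sumr_ge0 => i _; rewrite sqr_ge0.
have P : 0 <= mu * ip d d by apply: mulr_ge0 => //; exact: hpos.
rewrite eqB S1 ipff; rewrite ipdd ipfd Cab in P.
move: P S3.
set A1 := \sum_(i < N) (r i 0 - fh (x i)) ^+ 2.
set A2 := \sum_(i < N) (f (x i) - fh (x i)) ^+ 2.
set Ca := \sum_i beta i 0 * f (x i).
set Cb := \sum_i beta i 0 * fh (x i).
move=> P S3.
have e : mu * (- (Ca - Cb) + (- Ca + ip f f)) = mu * ip f f - 2 * mu * Ca + mu * Cb.
  by ring.
rewrite e in P; lra.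
Qed.

Theorem proposition2 (R : realType) (p N : nat)
  (H : ('rV[R]_p -> R) -> Prop) (ip : ('rV[R]_p -> R) -> ('rV[R]_p -> R) -> R)
  (K : 'rV[R]_p -> 'rV[R]_p -> R)
  (y : 'cV[R]_N) (x : 'I_N -> 'rV[R]_p) (mu lambda1 : R)
  (S : 'M[R]_N) (o_lasso : 'cV[R]_N) :
  pd_kernel K -> is_RKHS H ip K ->
  let Km := \matrix_(i < N, j < N) K (x i) (x j) in
  posdef_mx Km ->
  0 <= mu -> 0 <= lambda1 ->
  is_psd_sqrt (mu *: Km) S ->
  let X := X_mu Km S mu in
  (forall o : 'cV[R]_N,
     sqnorm2 (X *m y - X *m o_lasso) + lambda1 * norm1 o_lasso
     <= sqnorm2 (X *m y - X *m o) + lambda1 * norm1 o) ->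
  let beta := invmx (Km + mu%:M) *m (y - o_lasso) in
  let f_hat := fun z : 'rV[R]_p => \sum_(i < N) beta i 0 * K z (x i) in
  let J := fun (f : 'rV[R]_p -> R) (o : 'cV[R]_N) =>
    \sum_(i < N) (y i 0 - f (x i) - o i 0) ^+ 2 + mu * hnorm2 ip f
      + lambda1 * norm1 o in
  H f_hat /\
  forall (f : 'rV[R]_p -> R) (o : 'cV[R]_N), H f -> J f_hat o_lasso <= J f o.
Proof.
move=> pdK hR Km pd mu0 l0 hS X hmin beta f_hat J.
have [Hfh [eqB _]] := @key R p H ip K hR N x S mu (y - o_lasso) pd mu0 hS.
split=> // f o Hf.
have [_ [_ ineq]] := @key R p H ip K hR N x S mu (y - o) pd mu0 hS.
have conv : forall (g : 'rV[R]_p -> R) (o' : 'cV[R]_N),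
    \sum_(i < N) (y i 0 - g (x i) - o' i 0) ^+ 2
    = \sum_(i < N) ((y - o') i 0 - g (x i)) ^+ 2.
  by move=> g o'; apply: eq_bigr => i _; rewrite !mxE; congr (_ ^+ 2); ring.
rewrite /J /hnorm2 !conv.
have h1 := hmin o.
rewrite -!mulmxBr in h1.
have h2 := ineq f Hf.
rewrite /X -/f_hat in h1 h2 eqB.
rewrite -eqB.
lra.
Qed.
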